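(* Suppose a graph $G$ has $k$ connected components $C_1,\dots,C_k$, all of size $n_0$. Let $G_{C_1},\dots,G_{C_k}$ be the subgraphs on these components and $L^i$ their random walk Laplacians, and let $L_G$ be the random walk Laplacian of $G$. Then for any $s<n_0$, $\delta_s(L_G)=\max_i\delta_s(L^i)$.
   Context: Random walk Laplacian $L=I-D^{-1}A$ with $A$ adjacency matrix and $D$ degree matrix. The restricted isometry constant $\delta_s(\Phi)$ is the smallest $\delta\ge0$ with $(1-\delta)\|x\|_2^2\le\|\Phi_Tx\|_2^2\le(1+\delta)\|x\|_2^2$ for all index sets $T$ with $|T|\le s$ and all $x$, where $\Phi_T$ is the column submatrix indexed by $T$. *)

(* Defs.v *)
From HB Require Import structures.
From mathcomp Require Import all_boot all_order all_algebra.
From mathcomp Require Import classical_sets reals.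
Set Implicit Arguments. Unset Strict Implicit.
 Unset Printing Implicit Defensive.
Import Order.TTheory GRing.Theory Num.Theory.
Local Open Scope ring_scope.

Definition simple_graph (N : nat) (e : rel 'I_N) : Prop :=
  symmetric e /\ irreflexive e.

Definition adjm (R : realType) (N : nat) (e : rel 'I_N) : 'M[R]_N :=
  \matrix_(i, j) (e i j)%:R.

Definition degree (R : realType) (N : nat) (A : 'M[R]_N) (i : 'I_N) : R :=
  \sum_j A i j.

(* random walk Laplacian L = I - D^{-1} A, entrywise:
   L i j = [i = j] - A i j / d_i   (convention x / 0 = 0 for isolated vertices) *)
Definition rwLap (R : realType) (N : nat) (A : 'M[R]_N) : 'M[R]_N :=
  \matrix_(i, j) ((i == j)%:R - A i j / degree A i).

Definition is_component (N : nat) (e : rel 'I_N) (C : {set 'I_N}) : Prop :=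
  exists x, C = [set y | connect e x y].

Definition induced {N : nat} (e : rel 'I_N) (S : {set 'I_N}) : rel 'I_#|S| :=
  fun a b => e (enum_val a) (enum_val b).

Definition sqnorm (R : realType) (m : nat) (v : 'cV[R]_m) : R :=
  \sum_i (v i 0) ^+ 2.

Definition colsubT (R : realType) (m n : nat) (Phi : 'M[R]_(m, n))
  (T : {set 'I_n}) : 'M[R]_(m, #|T|) :=
  colsub (fun j : 'I_#|T| => enum_val j) Phi.

Definition rip_holds (R : realType) (m n : nat) (Phi : 'M[R]_(m, n))
  (s : nat) (d : R) : Prop :=
  forall T : {set 'I_n}, (#|T| <= s)%N -> forall x : 'cV[R]_#|T|,
    (1 - d) * sqnorm x <= sqnorm (colsubT Phi T *m x) <= (1 + d) * sqnorm x.

Definition ric (R : realType) (m n : nat) (Phi : 'M[R]_(m, n)) (s : nat) : R :=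
  inf [set d : R | 0 <= d /\ rip_holds Phi s d].
Arguments induced {N} e S.

(* Main.v *)
Require Import Defs.
From HB Require Import structures.
From mathcomp Require Import all_boot all_order all_algebra.
From mathcomp Require Import classical_sets reals.
From mathcomp Require Import lra ring.
Import Order.TTheory GRing.Theory Num.Theory.
Local Open Scope ring_scope.
Set Implicit Arguments. Unset Strict Implicit.

Section Gen.
Variable R : realType.

Lemma sum_in (N : nat) (A : {set 'I_N}) (F : 'I_N -> R) :
  (forall j, j \notin A -> F j = 0) ->
  \sum_j F j = \sum_(a < #|A|) F (enum_val a).
Proof.
move=> H; rewrite -(big_enum_val F) [RHS]big_mkcond /=.
by apply: eq_bigr => j _; case: ifP => // /negbT /H.
Qed.

Definition emb (N : nat) (A : {set 'I_N}) (z : 'cV[R]_#|A|) : 'cV[R]_N :=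
  \col_j \sum_a ((enum_val a == j)%:R * z a 0).
Arguments emb {N} A z.

Definition res (N : nat) (A : {set 'I_N}) (y : 'cV[R]_N) : 'cV[R]_#|A| :=
  \col_a y (enum_val a) 0.

Lemma emb_val N (A : {set 'I_N}) z b : emb A z (enum_val b) 0 = z b 0.
Proof.
rewrite mxE (bigD1 b) //= eqxx mul1r big1 ?addr0 // => a /negbTE ab.
by rewrite (inj_eq enum_val_inj) ab mul0r.
Qed.

Lemma emb_out N (A : {set 'I_N}) z j : j \notin A -> emb A z j 0 = 0.
Proof.
move=> jA; rewrite mxE big1 // => a _.
case: eqP => [E|]; last by rewrite mul0r.
by move: jA; rewrite -E enum_valP.
Qed.

Lemma sqnorm_emb N (A : {set 'I_N}) z : sqnorm (emb A z) = sqnorm z.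
Proof.
rewrite /sqnorm (@sum_in _ A); last by move=> j /emb_out ->; rewrite expr0n.
by apply: eq_bigr => b _; rewrite emb_val.
Qed.

Lemma mul_emb m N (A : {set 'I_N}) (Phi : 'M[R]_(m, N)) z i :
  (Phi *m emb A z) i 0 = \sum_a Phi i (enum_val a) * z a 0.
Proof.
rewrite mxE (@sum_in _ A); last by move=> j /emb_out ->; rewrite mulr0.
by apply: eq_bigr => b _; rewrite emb_val.
Qed.

Definition supp N (y : 'cV[R]_N) := [set j | y j 0 != 0].

Lemma supp_emb N (A : {set 'I_N}) z : supp (emb A z) \subset [set enum_val a | a in supp z].
Proof.
apply/fintype.subsetP => j; rewrite inE => nz.
have [/existsP[a /andP[/eqP<- za]]|] := boolP [exists a, (enum_val a == j) && (z a 0 != 0)].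
  by apply: imset_f; rewrite inE.
move/existsPn => H; move: nz; rewrite mxE big1 ?eqxx // => a _.
move: (H a); case: eqP => _ /=; last by rewrite mul0r.
by move/negPn/eqP ->; rewrite mulr0.
Qed.

Lemma card_supp_emb N (A : {set 'I_N}) z : (#|supp (emb A z)| <= #|supp z|)%N.
Proof.
rewrite -(card_imset _ (@enum_val_inj _ (mem A))).
apply: subset_leq_card; exact: supp_emb.
Qed.

Lemma card_supp_res N (A : {set 'I_N}) y : (#|supp (res A y)| <= #|supp y|)%N.
Proof.
rewrite -(card_imset _ (@enum_val_inj _ (mem A))).
apply: subset_leq_card; apply/fintype.subsetP => j /imsetP[a].
by rewrite !inE mxE => ? ->.
Qed.

Definition Pf m n (Phi : 'M[R]_(m, n)) (s : nat) (d : R) : Prop :=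
  forall y : 'cV[R]_n, (#|supp y| <= s)%N ->
  (1 - d) * sqnorm y <= sqnorm (Phi *m y) <= (1 + d) * sqnorm y.

Lemma rip_Pf m n (Phi : 'M[R]_(m, n)) s d : rip_holds Phi s d <-> Pf Phi s d.
Proof.
split=> H.
- move=> y Hy.
  have E1 : colsubT Phi (supp y) *m res (supp y) y = Phi *m y.
    apply/matrixP => i j; rewrite (ord1 j) !mxE (@sum_in _ (supp y)).
      by apply: eq_bigr => a _; rewrite !mxE.
    by move=> w; rewrite inE negbK => /eqP ->; rewrite mulr0.
  have E2 : sqnorm (res (supp y) y) = sqnorm y.
    rewrite /sqnorm (@sum_in _ (supp y)).
      by apply: eq_bigr => a _; rewrite !mxE.
    by move=> w; rewrite inE negbK => /eqP ->; rewrite expr0n.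
  by rewrite -E1 -E2; apply: H.
- move=> T HT x.
  have E1 : Phi *m emb T x = colsubT Phi T *m x.
    apply/matrixP => i j; rewrite (ord1 j) mul_emb !mxE.
    by apply: eq_bigr => a _; rewrite !mxE.
  rewrite -E1 -(sqnorm_emb (A:=T) x); apply: H.
  apply: leq_trans (card_supp_emb (A:=T) x) _.
  apply: leq_trans HT; apply: leq_trans (max_card _) _; by rewrite card_ord.
Qed.

Lemma sqnorm_ge0 n (y : 'cV[R]_n) : 0 <= sqnorm y.
Proof. by apply: sumr_ge0 => i _; rewrite sqr_ge0. Qed.

Lemma Pf_up m n (Phi : 'M[R]_(m, n)) s d d' : Pf Phi s d -> d <= d' -> Pf Phi s d'.
Proof.
move=> H dd y Hy; have /andP[h1 h2] := H y Hy; have h0 := sqnorm_ge0 y.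
apply/andP; split; first by apply: le_trans h1; nra.
by apply: le_trans h2 _; nra.
Qed.

Lemma coord_le n (y : 'cV[R]_n) j : y j 0 ^+ 2 <= sqnorm y.
Proof.
rewrite /sqnorm (bigD1 j) //= lerDl; apply: sumr_ge0 => i _; exact: sqr_ge0.
Qed.

Lemma Pf_exists m n (Phi : 'M[R]_(m, n)) s : exists d, 0 <= d /\ Pf Phi s d.
Proof.
pose K := \sum_i \sum_j \sum_l `|Phi i j| * `|Phi i l|.
have K0 : 0 <= K.
  by do 3!(apply: sumr_ge0 => ? _); rewrite mulr_ge0.
suff HK : forall y : 'cV[R]_n, sqnorm (Phi *m y) <= K * sqnorm y.
  exists (1 + K); split; first lra.
  move=> y _; have h0 := sqnorm_ge0 y; have h1 := sqnorm_ge0 (Phi *m y).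
  have h2 := HK y; apply/andP; split; nra.
move=> y; rewrite /K mulr_suml; apply: ler_sum => i _.
rewrite mxE expr2 !mulr_suml; apply: ler_sum => j _.
rewrite mulr_sumr mulr_suml; apply: ler_sum => l _.
apply: le_trans (ler_norm _) _.
rewrite normrM !normrM.
have hj := coord_le y j; have hl := coord_le y l.
have a0 := normr_ge0 (Phi i j); have b0 := normr_ge0 (Phi i l).
have c0 := normr_ge0 (y j 0); have d0 := normr_ge0 (y l 0).
have ej : `|y j 0| ^+ 2 = y j 0 ^+ 2 by rewrite real_normK // num_real.
have el : `|y l 0| ^+ 2 = y l 0 ^+ 2 by rewrite real_normK // num_real.
have hyy : `|y j 0| * `|y l 0| <= sqnorm y by nra.
have hab := mulr_ge0 a0 b0.
have -> : `|Phi i j| * `|y j 0| * (`|Phi i l| * `|y l 0|) = `|Phi i j| * `|Phi i l| * (`|y j 0| * `|y l 0|) by ring.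
exact: ler_wpM2l.
Qed.

Lemma inf_inter (k : nat) (Q : 'I_k -> R -> Prop) (QG : R -> Prop) :
  (forall d, QG d <-> forall i, Q i d) ->
  (exists d, 0 <= d /\ QG d) ->
  (forall i d d', Q i d -> d <= d' -> Q i d') ->
  inf [set d | 0 <= d /\ QG d] = \big[Num.max/0]_i inf [set d | 0 <= d /\ Q i d].
Proof.
move=> HQ [d0 [d00 Qd0]] Hup.
set m := \big[Num.max/0]_i _.
have lbG : has_lbound [set d | 0 <= d /\ QG d].
  by exists 0 => x [].
have lbi : forall i, has_lbound [set d | 0 <= d /\ Q i d].
  by move=> i; exists 0 => x [].
have m0 : 0 <= m.
  rewrite /m; apply: (big_ind (fun v => 0 <= v)) => //.
    by move=> x y hx hy; rewrite le_max hx.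
  move=> i _; apply: lb_le_inf; last by move=> x [].
  by exists d0; split => //; exact: (proj1 (HQ d0)).
apply/eqP; rewrite eq_le; apply/andP; split; last first.
  apply: lb_le_inf; first by exists d0.
  move=> d [dd Qd]; apply: bigmax_le => // i _.
  apply: ge_inf => //; split => //; exact: (proj1 (HQ d)).
apply/ler_addgt0Pr => eps eps0.
apply: ge_inf => //; split; first lra.
apply/HQ => i.
have [e [e0 Qe] he] : exists2 e : R, [set d : R | 0 <= d /\ Q i d]%classic e & e < inf [set d : R | 0 <= d /\ Q i d]%classic + eps.
  apply: inf_adherent => //; split => //; exists d0; split => //; exact: (proj1 (HQ d0)).
apply: (Hup i e) => //; apply/ltW; apply: (lt_le_trans he).
by rewrite lerD2r /m (bigD1 i) //= le_max lexx.
Qed.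
End Gen.
Section Graph.
Variables (R : realType) (N k : nat) (e : rel 'I_N) (C : 'I_k -> {set 'I_N}).
Hypothesis (He : simple_graph e) (Hinj : injective C)
  (Hcomp : forall i, is_component e (C i))
  (Hcov : forall v : 'I_N, exists i, v \in C i).

Let L := rwLap (adjm R e).
Let Li i := rwLap (adjm R (induced e (C i))).

Lemma csym : connect_sym e.
Proof. by apply: sym_connect_sym; case: He. Qed.

Lemma comp_disj w i j : w \in C i -> w \in C j -> i = j.
Proof.
move=> wi wj; apply: Hinj.
have [x Ex] := Hcomp i; have [x' Ex'] := Hcomp j.
move: wi wj; rewrite Ex Ex' !inE => xw x'w.
apply/setP => y; rewrite !inE; apply/idP/idP => H.
- apply: connect_trans x'w _; apply: connect_trans H; by rewrite csym.
- apply: connect_trans xw _; apply: connect_trans H; by rewrite csym.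
Qed.

Lemma nbr i u w : u \in C i -> e u w -> w \in C i.
Proof.
have [x Ex] := Hcomp i; rewrite Ex !inE => xu uw.
by apply: connect_trans xu _; apply: connect1.
Qed.

Lemma L_out i u w : u \in C i -> w \notin C i -> L u w = 0 /\ L w u = 0.
Proof.
move=> ui wi.
have euw : e u w = false by apply/negP => /(nbr ui); apply/negP.
have ewu : e w u = false by case: He => hs _; rewrite hs.
have uw : (u == w) = false by apply/negP => /eqP E; move: wi; rewrite -E ui.
rewrite /L !mxE euw ewu !mul0r !subr0; split; case: eqP => // E.
  by move: wi; rewrite -E ui.
by move: wi; rewrite E ui.
Qed.

Lemma deg_in i b :
  degree (adjm R e) (enum_val b) = degree (adjm R (induced e (C i))) b.
Proof.
rewrite /degree (@sum_in _ _ (C i)).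
  by apply: eq_bigr => a _; rewrite !mxE.
move=> w wi; rewrite mxE; have := @nbr i _ w (enum_valP b).
by case: (e _ w) => // /(_ isT); move: wi => /negbTE ->.
Qed.

Lemma L_in i a b : L (enum_val b) (enum_val a) = Li i b a.
Proof.
by rewrite /L /Li !mxE (inj_eq enum_val_inj) deg_in.
Qed.

Lemma claimA i s d : Pf L s d -> Pf (Li i) s d.
Proof.
move=> H z Hz.
have E : sqnorm (L *m emb (A:=C i) z) = sqnorm (Li i *m z).
  rewrite /sqnorm (@sum_in _ _ (C i)).
    apply: eq_bigr => b _; rewrite mul_emb mxE; congr (_ ^+ 2).
    by apply: eq_bigr => a _; rewrite L_in.
  move=> w wi; rewrite mul_emb big1 ?expr0n // => a _.
  by rewrite (proj2 (L_out (enum_valP a) wi)) mul0r.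
rewrite -E -(sqnorm_emb (A:=C i) z); apply: H.
exact: leq_trans (card_supp_emb _) Hz.
Qed.

Lemma partition (F : 'I_N -> R) :
  \sum_w F w = \sum_i \sum_(b < #|C i|) F (enum_val b).
Proof.
transitivity (\sum_w \sum_i ((w \in C i)%:R * F w)).
  apply: eq_bigr => w _; have [i0 wi0] := Hcov w.
  rewrite (bigD1 i0) //= wi0 mul1r big1 ?addr0 // => j ji.
  case wj: (w \in C j); last by rewrite mul0r.
  by move: ji; rewrite (comp_disj wj wi0) eqxx.
rewrite exchange_big; apply: eq_bigr => i _.
rewrite (@sum_in _ _ (C i)).
  by apply: eq_bigr => b _; rewrite enum_valP mul1r.
by move=> w /negbTE ->; rewrite mul0r.
Qed.

Lemma claimB s d : (forall i, Pf (Li i) s d) -> Pf L s d.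
Proof.
move=> H y Hy.
have E1 : forall i (b : 'I_#|C i|), (L *m y) (enum_val b) 0 = (Li i *m res (C i) y) b 0.
  move=> i b; rewrite !mxE (@sum_in _ _ (C i)).
    by apply: eq_bigr => a _; rewrite L_in; congr (_ * _); rewrite mxE.
  by move=> w wi; rewrite (proj1 (L_out (enum_valP b) wi)) mul0r.
have Ey : sqnorm y = \sum_i sqnorm (res (C i) y).
  rewrite /sqnorm partition; apply: eq_bigr => i _; apply: eq_bigr => b _.
  by rewrite mxE.
have ELy : sqnorm (L *m y) = \sum_i sqnorm (Li i *m res (C i) y).
  rewrite /sqnorm partition; apply: eq_bigr => i _; apply: eq_bigr => b _.
  by rewrite E1.
have Hi : forall i, (1 - d) * sqnorm (res (C i) y) <= sqnorm (Li i *m res (C i) y)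
    <= (1 + d) * sqnorm (res (C i) y).
  move=> i; apply: H; exact: leq_trans (card_supp_res _ _) Hy.
rewrite Ey ELy !mulr_sumr; apply/andP; split; apply: ler_sum => i _;
  by case/andP: (Hi i).
Qed.

End Graph.

Theorem mainTheorem8 (R : realType) (N k n0 : nat) (e : rel 'I_N)
  (C : 'I_k -> {set 'I_N}) (s : nat) :
  simple_graph e ->
  injective C ->
  (forall i, is_component e (C i)) ->
  (forall v : 'I_N, exists i, v \in C i) ->
  (forall i, #|C i| = n0) ->
  (s < n0)%N ->
  ric (rwLap (adjm R e)) s =
  \big[Num.max/0]_(i < k) ric (rwLap (adjm R (induced e (C i)))) s.
Proof.
move=> He Hinj Hcomp Hcov _ _.
apply: (@inf_inter R k (fun i d => rip_holds (rwLap (adjm R (induced e (C i)))) s d)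
  (fun d => rip_holds (rwLap (adjm R e)) s d)).
- move=> d; split.
  + move=> /rip_Pf H i; apply/rip_Pf; exact: claimA.
  + move=> H; apply/rip_Pf; apply: (claimB He Hinj Hcomp Hcov) => i.
    exact/rip_Pf.
- have [d [d0 Hd]] := Pf_exists (rwLap (adjm R e)) s.
  by exists d; split => //; apply/rip_Pf.
- move=> i d d' /rip_Pf H dd; apply/rip_Pf; exact: Pf_up H dd.
Qed.
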